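(* Let $A$, $B$ and $\psi$ be complex $D\times D$ matrices, where $\psi=\mathrm{diag}(\mu_1,\dots,\mu_D)$ is diagonal with $0\le\mu_1\le\mu_2\le\dots\le\mu_D$. For $1\le n\le D$ let $\psi_n=\mathrm{diag}(\mu_1,\dots,\mu_n,0,\dots,0)$. Then $$\chi_n(A\psi BB^\dagger\psi^\dagger A^\dagger)\le\mathrm{Tr}(A\psi_nBB^\dagger\psi_n^\dagger A^\dagger).$$
   Context: For a Hermitian $D\times D$ matrix $T$, $\chi_n(T)$ denotes the sum of its $n$ smallest eigenvalues counted with multiplicity. *)

(* Defs.v *)
From HB Require Import structures.
From mathcomp Require Import all_boot all_order all_algebra.
Set Implicit Arguments. Unset Strict Implicit. Unset Printing Implicit Defensive.
Import Order.TTheory GRing.Theory Num.Theory.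
Local Open Scope ring_scope.

Definition adjmx (C : numClosedFieldType) (m n : nat) (A : 'M[C]_(m, n)) : 'M[C]_(n, m) :=
  (map_mx Num.conj A)^T.

(* the eigenvalues of T counted with multiplicity: the roots (with
   multiplicity) of the characteristic polynomial, which splits over C *)
Definition eigvals (C : numClosedFieldType) (D : nat) (T : 'M[C]_D) : seq C :=
  sval (closed_field_poly_normal (char_poly T)).

(* chi_n(T) = sum of the n smallest eigenvalues (with multiplicity);
   meaningful for Hermitian T, whose eigenvalues are real, hence totally ordered *)
Definition chi (C : numClosedFieldType) (D : nat) (n : nat) (T : 'M[C]_D) : C :=
  \sum_(x <- take n (sort (fun x y : C => x <= y) (eigvals T))) x.

(* Main.v *)
Require Import Defs.
From HB Require Import structures.
From mathcomp Require Import all_boot all_order all_algebra.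
Import Order.TTheory GRing.Theory Num.Theory.
Local Open Scope ring_scope.

Lemma comb (C : numClosedFieldType) (D n : nat) (e : seq C) (d w : 'I_D -> C) :
  (1 <= n)%N -> (n <= D)%N ->
  perm_eq e [seq d i | i <- enum 'I_D] ->
  (forall i, 0 <= d i) -> (forall i, 0 <= w i) -> (forall i, w i <= 1) ->
  n%:R <= \sum_i w i ->
  \sum_(x <- take n (sort (fun x y : C => x <= y) e)) x <= \sum_i d i * w i.
Proof.
move=> n1 nD pe d0 w0 w1 sw.
set t := sort _ e.
have ps : perm_eq t e by apply/permPl; exact: perm_sort.
have pt : perm_eq t [seq d i | i <- enum 'I_D] by apply: perm_trans ps pe.
have tge0 : forall x, x \in t -> 0 <= x.
  by move=> x; rewrite (perm_mem pt) => /mapP [i _ ->].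
have st : sorted (fun x y : C => x <= y) t.
  apply: (sort_sorted_in (P := [pred x : C | 0 <= x])).
    by move=> x y hx hy; apply: real_leVge; apply: ger0_real.
  apply/allP => x; rewrite -(perm_mem ps).
  by move/tge0.
have szt : size t = D by rewrite (perm_size pt) size_map size_enum_ord.
set c := nth 0 t n.-1.
have hn1 : (n.-1 < size t)%N by rewrite szt prednK.
have c0 : 0 <= c by apply: tge0; apply: mem_nth.
have Htake : forall x, x \in take n t -> x <= c.
  move=> x /(nthP 0) [j]; rewrite size_takel ?szt // => hj <-.
  rewrite nth_take //; apply: (sorted_leq_nth le_trans lexx) => //.
    by rewrite inE szt (leq_trans hj).
  by rewrite -ltnS prednK.
have Hdrop : forall x, x \in drop n t -> c <= x.
  move=> x /(nthP 0) [j]; rewrite size_drop szt => hj <-.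
  rewrite nth_drop; apply: (sorted_leq_nth le_trans lexx) => //.
    by rewrite inE szt -ltn_subRL.
  by rewrite (leq_trans (leq_pred n)) // leq_addr.
pose g := fun x : C => if x <= c then x - c else 0.
have H1 : forall i, c * w i + g (d i) <= d i * w i.
  move=> i; rewrite /g; case: ifP => h.
    rewrite -subr_ge0.
    have -> : d i * w i - (c * w i + (d i - c)) = (c - d i) * (1 - w i).
      rewrite mulrBl !mulrBr !mulr1 opprD !opprB !addrA; congr (_ - d i).
      by rewrite [d i * w i - _]addrC addrC addrA.
    by apply: mulr_ge0; rewrite subr_ge0.
  rewrite addr0 ler_wpM2r //.
  have: c < d i by rewrite real_ltNge ?h // ger0_real.
  exact: ltW.
have H2 : \sum_i g (d i) = \sum_(x <- t) g x.
  by rewrite (perm_big _ pt) big_map big_enum.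
have H3 : \sum_(x <- t) g x = \sum_(x <- take n t) x - c * n%:R.
  rewrite -[in LHS](cat_take_drop n t) big_cat /=.
  rewrite [X in _ + X]big1_seq ?addr0; last first.
    move=> x /andP [_ hx]; rewrite /g; case: ifP => // hxc.
    by rewrite (@le_anti _ _ x c) ?subrr // hxc Hdrop.
  rewrite big_seq (eq_bigr (fun x => x - c)); last first.
    by move=> x hx; rewrite /g Htake.
  rewrite sumrB -!big_seq; congr (_ - _).
  by rewrite (big_nth 0) big_mkord sumr_const card_ord size_takel ?szt // mulr_natr.
apply: le_trans (ler_sum _ (fun i _ => H1 i)).
rewrite big_split /= -mulr_sumr H2 H3 addrCA -mulrBr lerDl.
by apply: mulr_ge0 => //; rewrite subr_ge0.
Qed.

Section Adj.
Variable C : numClosedFieldType.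
Set Implicit Arguments. Unset Strict Implicit.

Lemma adjmxE m n (A : 'M[C]_(m, n)) i j : adjmx A i j = Num.conj (A j i).
Proof. by rewrite !mxE. Qed.

Lemma adjmxM m n p (A : 'M[C]_(m, n)) (B : 'M[C]_(n, p)) :
  adjmx (A *m B) = adjmx B *m adjmx A.
Proof. by rewrite /adjmx map_mxM trmx_mul. Qed.

Lemma adjmxK m n (A : 'M[C]_(m, n)) : adjmx (adjmx A) = A.
Proof. by apply/matrixP => i j; rewrite !mxE conjCK. Qed.

Lemma adjmxB m n (A B : 'M[C]_(m, n)) : adjmx (A - B) = adjmx A - adjmx B.
Proof. by apply/matrixP => i j; rewrite !mxE rmorphB. Qed.

Lemma adjmx1 n : adjmx (1%:M : 'M[C]_n) = 1%:M.
Proof. by rewrite /adjmx map_scalar_mx rmorph1 tr_scalar_mx. Qed.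

Lemma tstarE m n (A : 'M[C]_(m, n)) : map_mx Num.conj (trmx A) = adjmx A.
Proof. by apply/matrixP => i j; rewrite !mxE. Qed.

Lemma diag_ge0 m n (A : 'M[C]_(m, n)) i : 0 <= (A *m adjmx A) i i.
Proof. by rewrite mxE; apply: sumr_ge0 => k _; rewrite adjmxE mul_conjC_ge0. Qed.

Lemma diag_ge0' m n (A : 'M[C]_(m, n)) i : 0 <= (adjmx A *m A) i i.
Proof. by have := diag_ge0 (adjmx A) i; rewrite adjmxK. Qed.

Lemma tr_ge0' m n (A : 'M[C]_(m, n)) : 0 <= \tr (adjmx A *m A).
Proof. by apply: sumr_ge0 => i _; apply: diag_ge0'. Qed.

Lemma proj_compl r n (Q : 'M[C]_(r, n)) : Q *m adjmx Q = 1%:M ->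
  1%:M - adjmx Q *m Q = adjmx (1%:M - adjmx Q *m Q) *m (1%:M - adjmx Q *m Q).
Proof.
move=> hQ.
have PP : adjmx Q *m Q *m (adjmx Q *m Q) = adjmx Q *m Q.
  by rewrite mulmxA -(mulmxA _ Q) hQ mulmx1.
rewrite adjmxB adjmx1 adjmxM adjmxK.
rewrite mulmxBl !mulmxBr !mul1mx !mulmx1 PP.
by rewrite subrr oppr0 addr0.
Qed.

Lemma char_poly_conj n (V X : 'M[C]_n) : V \in unitmx ->
  char_poly (invmx V *m X *m V) = char_poly X.
Proof.
move=> Vu; rewrite /char_poly /char_poly_mx.
have hVV : map_mx polyC (invmx V) *m map_mx polyC V = 1%:M.
  by rewrite -map_mxM mulVmx // map_scalar_mx.
have -> : 'X%:M - map_mx polyC (invmx V *m X *m V) =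
   map_mx polyC (invmx V) *m ('X%:M - map_mx polyC X) *m map_mx polyC V.
  rewrite mulmxBr mulmxBl !map_mxM; congr (_ - _).
  by rewrite mul_mx_scalar -scalemxAl hVV -mul_mx_scalar mul1mx.
rewrite !det_mulmx mulrAC -det_mulmx hVV det1 mul1r.
by []. Qed.


Lemma eigvals_perm D (T V : 'M[C]_D) (d : 'rV[C]_D) : V \in unitmx ->
  T = invmx V *m diag_mx d *m V ->
  perm_eq (eigvals T) [seq d 0 i | i <- enum 'I_D].
Proof.
move=> Vu ->; rewrite /eigvals; case: closed_field_poly_normal => s /= hs.
apply: prod_XsubC_eq.
move: hs; rewrite (monicP (char_poly_monic _)) scale1r => <-.
rewrite char_poly_conj // char_poly_trig ?diag_mx_is_trig // big_map big_enum /=.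
by apply: eq_bigr => i _; rewrite mxE eqxx mulr1n.
Qed.

End Adj.
Unset Implicit Arguments.

Theorem lemma1 (C : numClosedFieldType) (D : nat) (A B : 'M[C]_D) (mu : 'rV[C]_D)
  (hmu0 : forall i : 'I_D, 0 <= mu 0 i)
  (hmon : forall i j : 'I_D, (i <= j)%N -> mu 0 i <= mu 0 j)
  (n : nat) (hn1 : (1 <= n)%N) (hnD : (n <= D)%N) :
  let psi := diag_mx mu in
  let psin := diag_mx (\row_(i < D) (if (i < n)%N then mu 0 i else 0)) in
  chi n (A *m psi *m B *m adjmx B *m adjmx psi *m adjmx A)
    <= \tr (A *m psin *m B *m adjmx B *m adjmx psin *m adjmx A).
Proof.
cbv zeta.
set psi := diag_mx mu.
set psin := diag_mx (\row_(i < D) _).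
set M := A *m psi *m B.
set Y := A *m psin *m B.
have -> : A *m psi *m B *m adjmx B *m adjmx psi *m adjmx A = M *m adjmx M.
  by rewrite /M !adjmxM !mulmxA.
have -> : A *m psin *m B *m adjmx B *m adjmx psin *m adjmx A = Y *m adjmx Y.
  by rewrite /Y !adjmxM !mulmxA.
set T := M *m adjmx M.
have hTT : adjmx T = T by rewrite /T adjmxM adjmxK.
have Tn : T \is normalmx by apply/normalmxP; rewrite tstarE hTT.
set V := spectralmx T; set d := spectral_diag T.
have Vu : V \in unitmx := spectral_unit T.
have eT : T = invmx V *m diag_mx d *m V by apply/orthomx_spectralP.
have iV : invmx V = adjmx V by rewrite invmx_unitary ?spectral_unitarymx // tstarE.
have VV : V *m adjmx V = 1%:M by rewrite -iV mulmxV.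
have VV' : adjmx V *m V = 1%:M by rewrite -iV mulVmx.
have hd : V *m T *m adjmx V = diag_mx d.
  by rewrite eT iV !mulmxA VV mul1mx -mulmxA VV mulmx1.
have d0 : forall i, 0 <= d 0 i.
  move=> i; have := diag_ge0 (V *m M) i.
  by rewrite adjmxM mulmxA -(mulmxA V M (adjmx M)) -/T hd mxE eqxx mulr1n.
set Z := A *m (copid_mx n *m psi) *m B.
have hpsin : psin = pid_mx n *m psi.
  apply/matrixP => i j; rewrite /psin /psi mul_mx_diag !mxE.
  case: (eqVneq i j) => [<-|ne]; first by rewrite eqxx /=; case: (i < n)%N; rewrite ?mulr1n ?mul1r ?mulr0n ?mul0r.
  rewrite mulr0n; case: eqP => [/ord_inj e|_]; first by rewrite e eqxx in ne.
  by rewrite mul0r.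
have hMYZ : M = Y + Z.
  rewrite /M /Y /Z -mulmxDl -mulmxDr; congr (A *m _ *m B).
  by rewrite hpsin /copid_mx mulmxBl mul1mx addrC subrK.
have rZ : (\rank Z <= D - n)%N.
  apply: leq_trans (mxrankM_maxl _ B) _.
  apply: leq_trans (mxrankM_maxr A _) _.
  apply: leq_trans (mxrankM_maxl _ psi) _.
  by rewrite rank_copid_mx.
set K := kermx Z.
have rn : (n <= \rank K)%N.
  rewrite mxrank_ker; apply: leq_trans (leq_sub2l D rZ).
  by rewrite subKn.
set Q := schmidt (row_base K).
have QU : Q *m adjmx Q = 1%:M.
  have /unitarymxP := schmidt_unitarymx (row_base K) (rank_leq_col K).
  by rewrite tstarE.
have QZ : Q *m Z = 0.
  apply/sub_kermxP; rewrite /Q (eqmx_schmidt_free (row_base_free K)).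
  by rewrite eq_row_base submx_refl.
set R := Q *m adjmx V.
have RR : R *m adjmx R = 1%:M.
  by rewrite /R adjmxM adjmxK mulmxA -(mulmxA Q) VV' mulmx1.
pose w := fun i => (adjmx R *m R) i i.
have step1 : chi n T <= \sum_i d 0 i * w i.
  rewrite /chi; apply: comb => //.
  - exact: eigvals_perm eT.
  - by move=> i; apply: diag_ge0'.
  - move=> i; have := diag_ge0' (1%:M - adjmx R *m R) i.
    by rewrite -proj_compl // mxE [1%:M i i]mxE eqxx mulr1n [X in _ + X]mxE subr_ge0.
  - have -> : \sum_i w i = \tr (adjmx R *m R) by [].
    by rewrite mxtrace_mulC RR mxtrace1 ler_nat.
have step2 : \sum_i d 0 i * w i = \tr (Q *m T *m adjmx Q).
  have -> : Q *m T *m adjmx Q = R *m (diag_mx d *m adjmx R).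
    by rewrite eT iV /R adjmxM adjmxK !mulmxA.
  rewrite mxtrace_mulC -mulmxA mul_diag_mx /mxtrace.
  by apply: eq_bigr => i _; rewrite mxE.
have step3 : Q *m T *m adjmx Q = (Q *m Y) *m adjmx (Q *m Y).
  have QM : Q *m M = Q *m Y by rewrite hMYZ mulmxDr QZ addr0.
  by rewrite /T mulmxA -mulmxA -adjmxM QM.
have step4 : \tr ((Q *m Y) *m adjmx (Q *m Y)) <= \tr (Y *m adjmx Y).
  rewrite mxtrace_mulC adjmxM [\tr (Y *m _)]mxtrace_mulC -subr_ge0 -raddfB /=.
  have E : adjmx ((1%:M - adjmx Q *m Q) *m Y) *m ((1%:M - adjmx Q *m Q) *m Y)
      = adjmx Y *m (1%:M - adjmx Q *m Q) *m Y.
    rewrite (adjmxM (1%:M - adjmx Q *m Q) Y) mulmxA.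
    by rewrite -(mulmxA (adjmx Y) (adjmx (1%:M - adjmx Q *m Q))) -(proj_compl QU).
  have -> : adjmx Y *m Y - adjmx Y *m adjmx Q *m (Q *m Y)
      = adjmx ((1%:M - adjmx Q *m Q) *m Y) *m ((1%:M - adjmx Q *m Q) *m Y).
    by rewrite E mulmxBr mulmx1 mulmxBl !mulmxA.
  exact: tr_ge0'.
by rewrite (le_trans step1) // step2 step3.
Qed.
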